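(* Let $G=(V,E)$ be a chordal graph on a non-empty finite vertex set $V$, and let $\{A_v\}_{v\in V}$ be events in a probability space with $\bigcup_{v\in V}A_v\neq\emptyset$. For non-empty $J\subseteq V$ put $B_J:=\bigcap_{i\in J}A_i\cap\bigcap_{i\in V\setminus J}\overline{A_i}$, and let \[ \alpha'(G):=\max\{\,c(G[J]) : J\subseteq V,\ J\neq\emptyset,\ B_J\neq\emptyset\,\}. \] Then for every integer $r\ge1$, \[ \Pr\Big(\bigcup_{v\in V} A_v\Big) \ge \frac{1}{\alpha'(G)} \sum_{\substack{I\in\mathscr{C}(G)\\ |I|\le 2r}} (-1)^{|I|-1}\Pr\Big(\bigcap_{i\in I} A_i\Big) \quad\text{and}\quad \Pr\Big(\bigcup_{v\in V} A_v\Big) \ge \frac{1}{\alpha'(G)} \sum_{I\in\mathscr{C}(G)} (-1)^{|I|-1}\Pr\Big(\bigcap_{i\in I} A_i\Big). \] In particular, if $G[J]$ is connected for every non-empty $J\subseteq V$ with $B_J\neq\emptyset$, then $\Pr\big(\bigcup_{v\in V}A_v\big)=\sum_{I\in\mathscr{C}(G)}(-1)^{|I|-1}\Pr\big(\bigcap_{i\in I}A_i\big)$.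
   Context: A graph is chordal if it contains no cycle of length four or more as an induced subgraph. $\mathscr{C}(G)$ denotes the clique complex of $G$: the set of all non-empty subsets $I\subseteq V$ whose elements are pairwise adjacent in $G$. $G[J]$ is the subgraph induced on $J$, $c(\cdot)$ is the number of connected components, and $\overline{A}$ is the complement of the event $A$. *)

(* Defs.v *)
From HB Require Import structures.
From mathcomp Require Import all_boot all_order all_algebra.
From Stdlib Require Import ClassicalEpsilon.

Set Implicit Arguments.
Unset Strict Implicit.
Unset Printing Implicit Defensive.

Import Order.TTheory GRing.Theory Num.Theory.
Local Open Scope ring_scope.

(* A (simple) graph on a finite vertex type V is a symmetric irreflexive
   relation e : rel V. *)
Definition chordal (V : finType) (e : rel V) : Prop :=
  forall (n : nat) (c : 'I_n -> V), (4 <= n)%N -> injective c ->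
    ~ (forall i j : 'I_n,
         e (c i) (c j) =
         ((val j == (val i).+1 %% n)%N || (val i == (val j).+1 %% n)%N)).

Definition clique (V : finType) (e : rel V) (I : {set V}) : bool :=
  (I != set0) && [forall x in I, forall y in I, (x != y) ==> e x y].

Definition ncomp_induced (V : finType) (e : rel V) (J : {set V}) : nat :=
  n_comp (fun x y => [&& x \in J, y \in J & e x y]) (mem J).

(* A probability space: a (finitely additive) probability measure Pr defined
   on an algebra of events of a sample space Omega.  Every (countably
   additive) probability space is an instance. *)
Record probSpace (R : realFieldType) (Omega : Type) := ProbSpace {
  meas : (Omega -> Prop) -> Prop;
  Pr : (Omega -> Prop) -> R;
  meas_full : meas (fun _ => True);
  meas_compl : forall X, meas X -> meas (fun w => ~ X w);
  meas_inter : forall X Y, meas X -> meas Y -> meas (fun w => X w /\ Y w);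
  Pr_ext : forall X Y, (forall w, X w <-> Y w) -> Pr X = Pr Y;
  Pr_ge0 : forall X, meas X -> 0 <= Pr X;
  Pr_full : Pr (fun _ => True) = 1;
  Pr_add : forall X Y, meas X -> meas Y -> (forall w, X w -> Y w -> False) ->
             Pr (fun w => X w \/ Y w) = Pr X + Pr Y
}.

Definition pdec (P : Prop) : bool :=
  if excluded_middle_informative P then true else false.

Definition atomB (V : finType) (Omega : Type) (A : V -> Omega -> Prop)
  (J : {set V}) : Omega -> Prop :=
  fun w => (forall i, i \in J -> A i w) /\ (forall i, i \notin J -> ~ A i w).

Definition alpha' (V : finType) (e : rel V) (Omega : Type)
  (A : V -> Omega -> Prop) : nat :=
  \max_(J : {set V} | (J != set0) && pdec (exists w, atomB A J w))
     ncomp_induced e J.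

Definition unionA (V : finType) (Omega : Type) (A : V -> Omega -> Prop) :=
  fun w => exists v, A v w.
Definition interA (V : finType) (Omega : Type) (A : V -> Omega -> Prop)
  (I : {set V}) := fun w => forall i, i \in I -> A i w.

(* Main.v *)
Require Import Defs.
From HB Require Import structures.
From mathcomp Require Import all_boot all_order all_algebra.
From Stdlib Require Import Lia Classical ClassicalEpsilon FunctionalExtensionality PropExtensionality.
Set Implicit Arguments. Unset Strict Implicit. Unset Printing Implicit Defensive.
Import Order.TTheory GRing.Theory Num.Theory.

Ltac tonat := repeat match goal with
 | H : is_true (leq _ _) |- _ => move/ssrnat.leP: H => H
 | H : is_true (@eq_op _ _ _) |- _ => move/eqtype.eqP: H => H
 | H : context [addn] |- _ => rewrite -plusE in H
 | H : context [subn] |- _ => rewrite -minusE in H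
 | H : context [muln] |- _ => rewrite -multE in H
 | |- is_true (leq _ _) => apply/ssrnat.leP
 | |- is_true (@eq_op _ _ _) => apply/eqtype.eqP
 | |- context [addn] => rewrite -plusE
 | |- context [subn] => rewrite -minusE
 | |- context [muln] => rewrite -multE
 end.
Ltac nlia := tonat; lia.

Lemma no_cycle (V : finType) (e : rel V) (v : V) (s : seq V) :
  chordal e -> symmetric e -> irreflexive e -> uniq s -> (4 <= size s)%N ->
  (forall i j, (i < j)%N -> (j < size s)%N ->
     e (nth v s i) (nth v s j) = (j == i.+1) || ((i == 0%N) && (j == (size s).-1))) ->
  False.
Proof.
move=> ch sym irr us s4 H.
pose n := size s.
pose c := fun i : 'I_n => nth v s i.
apply: (ch n c s4).
  move=> i j /eqP; rewrite /c nth_uniq // => /eqP; exact: val_inj.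
have hij : forall i j : 'I_n, (i < j)%N ->
   e (c i) (c j) = ((val j == (val i).+1 %% n)%N || (val i == (val j).+1 %% n)%N).
  move=> i j ij; rewrite /c H //.
  have jn := ltn_ord j.
  rewrite (@modn_small i.+1) ?(leq_ltn_trans ij) //.
  have [jn1|] := ltnP j.+1 n.
    rewrite modn_small // (ltn_eqF (ltn_trans ij (ltnSn j))) orbF.
    have -> : (val j == (size s).-1) = false.
      by rewrite ltn_eqF // -ltnS prednK // (leq_ltn_trans _ jn).
    by rewrite andbF orbF.
  move=> nj; have jeq : j.+1 = n by apply/eqP; rewrite eqn_leq nj jn.
  rewrite jeq modnn.
  have -> : (val j == (size s).-1) by apply/eqP; apply: (@addIn 1); rewrite !addn1 jeq prednK // (leq_ltn_trans _ jn).
  by rewrite andbT.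
move=> i j; case: (ltngtP i j) => [ij|ji|ij].
- exact: hij.
- by rewrite sym hij // orbC.
- have -> : i = j by exact: val_inj.
  rewrite irr; have jn := ltn_ord j.
  have [jn1|] := ltnP j.+1 n.
    by rewrite modn_small // !(ltn_eqF (ltnSn j)) // eq_sym (ltn_eqF (ltnSn j)).
  move=> nj; have jeq : j.+1 = n by apply/eqP; rewrite eqn_leq nj jn.
  rewrite jeq modnn /=.
  have j0 : (0 < val j)%N by rewrite -ltnS jeq (leq_trans _ s4).
  by rewrite (gtn_eqF j0).
Qed.

Definition er (V : finType) (e : rel V) (J : {set V}) : rel V :=
  fun x y => [&& x \in J, y \in J & e x y].

Lemma chord_aux (V : finType) (e : rel V) (v : V) (K N : {set V}) :
  chordal e -> symmetric e -> irreflexive e -> v \notin K ->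
  (forall u, (u \in N) = (u \in K) && e v u) ->
  forall n (x : seq V), (size x <= n)%N -> (0 < size x)%N -> uniq x -> {subset x <= K} ->
  (forall i, (i.+1 < size x)%N -> e (nth v x i) (nth v x i.+1)) ->
  nth v x 0 \in N -> nth v x (size x).-1 \in N ->
  connect (er e N) (nth v x 0) (nth v x (size x).-1).
Proof.
move=> ch sym irr vK Nchar; elim=> [|n IH] x; first by case: x.
move=> szx x0 ux xK adj hN lN.
case: (classic (exists k, [/\ (0 < k)%N, (k < (size x).-1)%N & nth v x k \in N])).
  case=> k [k0 kl kN].
  have kx : (k.+1 < size x)%N by nlia.
  have h1 := IH (take k.+1 x).
  rewrite size_takel ?(ltnW kx) //= in h1.
  have {}h1 := h1 (leq_trans kx szx) isT (take_uniq _ ux).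
  rewrite !nth_take // in h1.
  have c1 : connect (er e N) (nth v x 0) (nth v x k).
    apply: h1 => //.
      by move=> y /mem_take /xK.
    move=> i ik; rewrite !nth_take ?ik ?(ltnW ik) //; apply: adj; nlia.
  have h2 := IH (drop k x).
  rewrite size_drop !nth_drop addn0 in h2.
  have e1 : (k + (size x - k).-1)%N = (size x).-1 by nlia.
  rewrite e1 in h2.
  apply: (connect_trans c1); apply: h2 => //.
  - by nlia.
  - by nlia.
  - exact: drop_uniq.
  - by move=> y /mem_drop /xK.
  - move=> i ik; rewrite !nth_drop; have -> : (k + i.+1 = (k + i).+1)%N by nlia.
    apply: adj; nlia.
move=> nA.
have nA' : forall k, (0 < k)%N -> (k < (size x).-1)%N -> nth v x k \notin N.
  by move=> k k0 kl; apply/negP=> kN; apply: nA; exists k.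
clear nA.
case: (classic (exists i j, [/\ (i.+1 < j)%N, (j < size x)%N & e (nth v x i) (nth v x j)])).
  case=> i [j [ij jx eij]].
  have ix : (i.+1 < size x)%N by apply: ltn_trans jx.
  pose y := take i.+1 x ++ drop j x.
  have sy : size y = (i.+1 + (size x - j))%N.
    by rewrite size_cat size_takel ?size_drop // ltnW.
  have nthy : forall l, nth v y l =
     if (l < i.+1)%N then nth v x l else nth v x (j + (l - i.+1)).
    move=> l; rewrite nth_cat size_takel ?(ltnW ix) //.
    by case: ifP => li; rewrite ?nth_take ?nth_drop.
  have y0 : (0 < size y)%N by rewrite sy.
  have lasty : (size y).-1 = (i + (size x - j))%N by rewrite sy.
  have h := IH y.
  rewrite !nthy /= lasty in h.
  have ilt : (i + (size x - j) < i.+1)%N = false.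
    by apply/negbTE; rewrite -leqNgt; nlia.
  rewrite ilt in h.
  have e2 : (j + (i + (size x - j) - i.+1))%N = (size x).-1 by nlia.
  rewrite e2 in h.
  apply: h => //.
  - rewrite sy; nlia.
  - apply: subseq_uniq ux.
    rewrite -[X in subseq _ X](cat_take_drop i.+1 x) /y subseq_cat2l.
    have -> : j = ((j - i.+1) + i.+1)%N by nlia.
    rewrite -drop_drop; exact: drop_subseq.
  - by move=> z; rewrite mem_cat => /orP[/mem_take|/mem_drop] /xK.
  - move=> l ly; rewrite !nthy.
    case: (ltngtP l.+1 i.+1) => [li|il|li].
    + apply: adj; nlia.
    + have -> : (j + (l.+1 - i.+1) = (j + (l - i.+1)).+1)%N by nlia.
      apply: adj; rewrite sy in ly; nlia.
    + have -> : l = i by nlia.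
      by rewrite subnn addn0.
move=> nB.
have nB' : forall i j, (i.+1 < j)%N -> (j < size x)%N -> ~~ e (nth v x i) (nth v x j).
  by move=> i j ij jx; apply/negP=> eij; apply: nB; exists i, j.
clear nB.
have [x1|x1] := leqP (size x) 1.
  have -> : (size x).-1 = 0%N by nlia.
  exact: connect0.
have [x2|x2] := leqP (size x) 2.
  have -> : (size x).-1 = 1%N by nlia.
  apply: connect1; rewrite /er hN /=.
  have e1 : (size x).-1 = 1%N by nlia.
  rewrite e1 in lN.
  by rewrite lN adj //; nlia.
exfalso.
have vx : v \notin x by apply/negP=> /xK; apply/negP.
apply: (@no_cycle V e v (v :: x) ch sym irr) => //=.
- by rewrite vx ux.
move=> i j ij; case: i ij => [|i] ij.
  case: j ij => [//|j] _ jx /=.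
  have jK : nth v x j \in K by apply: xK; apply: mem_nth.
  have [j0|j0] := posnP j.
    by rewrite j0 /=; move: hN; rewrite Nchar => /andP[].
  have [jl|jl] := ltnP j (size x).-1.
    have := nA' j j0 jl; rewrite Nchar jK /= => /negbTE ->.
    have h : (j.+1 < size x)%N by nlia.
    by rewrite eqSS (gtn_eqF j0) (ltn_eqF h).
  have jl' : j = (size x).-1 by nlia.
  move: lN; rewrite Nchar -jl' => /andP[_ ->].
  have h : (j.+1 == size x) by nlia.
  by rewrite h orbT.
case: j ij => [//|j] ij jx /=.
rewrite ltnS in ij; rewrite ltnS in jx; rewrite eqSS orbF.
have [ji|ji] := eqVneq j i.+1.
  by rewrite ji adj // -ji.
apply/negbTE; apply: nB' => //; by rewrite ltn_neqAle eq_sym ji ij.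
Qed.

Definition cls (V : finType) (e : rel V) (J : {set V}) (x : V) : {set V} :=
  [set y | connect (er e J) x y].

Lemma er_sym (V : finType) (e : rel V) J : symmetric e -> symmetric (er e J).
Proof. by move=> sym x y; rewrite /er sym andbCA. Qed.

Lemma cls_eq (V : finType) (e : rel V) J x y : symmetric e ->
  (cls e J x == cls e J y) = connect (er e J) x y.
Proof.
move=> sym; have cs := sym_connect_sym (er_sym J sym).
apply/eqP/idP => [h|h].
  have : y \in cls e J y by rewrite inE connect0.
  by rewrite -h inE.
apply/setP=> z; rewrite !inE; apply/idP/idP => hz.
  by apply: connect_trans hz; rewrite cs.
exact: connect_trans h hz.
Qed.

Lemma path_in (V : finType) (e : rel V) J x p : path (er e J) x p -> all (mem J) p.
Proof.
elim: p x => [//|y p IH] x /= /andP[/and3P[_ yJ _] /IH ->]; by rewrite yJ.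
Qed.

Lemma conn_in (V : finType) (e : rel V) J x y :
  connect (er e J) x y -> x = y \/ y \in J.
Proof.
move=> /connectP[p pp ->]; case: p pp => [|z p] pp; first by left.
right; have := path_in pp; move/allP; apply.
by rewrite /= mem_last.
Qed.

Lemma ncompE (V : finType) (e : rel V) J : symmetric e ->
  ncomp_induced e J = #|cls e J @: J|.
Proof.
move=> sym; have cs := sym_connect_sym (er_sym J sym).
rewrite /ncomp_induced /n_comp_mem.
pose Rt := [set x in J | roots (er e J) x].
have -> : #|predI (roots (fun x y => [&& x \in J, y \in J & e x y])) (mem J)| = #|Rt|.
  by apply: eq_card => x; rewrite !inE andbC.
have -> : cls e J @: J = cls e J @: Rt.
  apply/setP=> S; apply/imsetP/imsetP => [[x xJ ->]|[x]].
    exists (fingraph.root (er e J) x).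
      rewrite inE (roots_root cs) andbT.
      by case: (conn_in (connect_root (er e J) x)) => [<-|].
    by apply/eqP; rewrite cls_eq // connect_root.
  by rewrite inE => /andP[xJ _] ->; exists x.
apply: esym; apply: card_in_imset => x y; rewrite !inE => /andP[_ /eqP rx] /andP[_ /eqP ry].
by move/eqP; rewrite cls_eq // => /(fingraph.rootP cs); rewrite rx ry.
Qed.

Lemma card_kernel (T U W : finType) (f : T -> U) (g : T -> W) (A : {set T}) :
  {in A &, forall x y, (f x == f y) = (g x == g y)} -> #|f @: A| = #|g @: A|.
Proof.
move=> H.
pose h := fun u : U => g @: (A :&: f @^-1: [set u]).
have hf : {in A, forall x, h (f x) = [set g x]}.
  move=> x xA; apply/setP=> w; rewrite inE; apply/imsetP/eqP => [[y]|->].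
    by rewrite !inE => /andP[yA /eqP fy] ->; apply/eqP; rewrite -H // fy.
  by exists x => //; rewrite !inE xA eqxx.
rewrite -(@card_in_imset _ _ h (f @: A)); last first.
  move=> u1 u2 /imsetP[x1 x1A ->] /imsetP[x2 x2A ->].
  rewrite !hf // => /set1_inj /eqP; rewrite -H // => /eqP.
  done.
rewrite -imset_comp (eq_in_imset (g := fun x => [set g x])); last first.
  by move=> x xA /=; rewrite hf.
rewrite (imset_comp (@set1 W) g) card_imset //; exact: set1_inj.
Qed.

Lemma chord_conn (V : finType) (e : rel V) (v : V) (J : {set V}) a b :
  chordal e -> symmetric e -> irreflexive e ->
  a \in [set u in J :\ v | e v u] -> b \in [set u in J :\ v | e v u] ->
  connect (er e (J :\ v)) a b -> connect (er e [set u in J :\ v | e v u]) a b.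
Proof.
move=> ch sym irr aN bN /connectP[p pp eb].
move: bN; rewrite eb; case: (shortenP pp) => p' pp' up' _ bN.
have := @chord_aux V e v (J :\ v) [set u in J :\ v | e v u] ch sym irr _ _ (size (a :: p')) (a :: p').
rewrite /= -/(last a p') => h.
have <- : nth v (a :: p') (size p') = last a p'.
  by rewrite -[size p']/((size (a :: p')).-1) nth_last.
apply: h => //.
- by rewrite !inE eqxx.
- by move=> u; rewrite !inE.
- move=> y; rewrite inE => /orP[/eqP ->|yp].
    by move: aN; rewrite inE => /andP[].
  by have := path_in pp'; move/allP; apply.
- move=> i ip; move/pathP: pp' => /(_ v i ip) /and3P[_ _].
  done.
- by rewrite -[size p']/((size (a :: p')).-1) nth_last /=.
Qed.

Lemma conn_mono (V : finType) (e : rel V) (A B : {set V}) x y :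
  A \subset B -> connect (er e A) x y -> connect (er e B) x y.
Proof.
move=> /subsetP AB; apply: connect_sub => a b /and3P[aA bA eab].
by apply: connect1; rewrite /er (AB _ aA) (AB _ bA).
Qed.

Lemma subD1 (V : finType) (J : {set V}) v : J :\ v \subset J.
Proof. exact: subD1set. Qed.

Lemma connJ_split (V : finType) (e : rel V) (v : V) (J : {set V}) x y :
  symmetric e -> x \in J :\ v -> connect (er e J) x y ->
  connect (er e (J :\ v)) x y \/
  exists2 n, n \in [set u in J :\ v | e v u] & connect (er e (J :\ v)) x n.
Proof.
move=> sym xK /connectP[p pp ->]; elim: p x xK pp => [|z p IH] x xK /=.
  by left.
move=> /andP[/and3P[xJ zJ exz] pz].
have [zv|zv] := eqVneq z v.
  right; exists x => //; rewrite inE xK /= -zv sym //.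
have zK : z \in J :\ v by rewrite !inE zv.
case: (IH z zK pz) => [h|[n nN h]].
  left; apply: connect_trans h; apply: connect1; by rewrite /er xK zK exz.
right; exists n => //; apply: connect_trans h; apply: connect1; by rewrite /er xK zK exz.
Qed.

Lemma connJ_K (V : finType) (e : rel V) (v : V) (J : {set V}) x y :
  symmetric e -> v \in J -> x \in J :\ v -> ~~ connect (er e J) x v ->
  connect (er e J) x y = connect (er e (J :\ v)) x y.
Proof.
move=> sym vJ xK nc; apply/idP/idP => h.
  case: (connJ_split sym xK h) => // [[n]].
  rewrite !inE => /andP[/andP[nv nJ] evn] hn; exfalso; move/negP: nc; apply.
  apply: (connect_trans (y := n)).
    exact: conn_mono (subD1 _ _) hn.
  by apply: connect1; rewrite /er nJ vJ sym.
exact: conn_mono (subD1 _ _) h.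
Qed.

Lemma connJv (V : finType) (e : rel V) (v : V) (J : {set V}) x :
  symmetric e -> v \in J -> x \in J :\ v ->
  connect (er e J) x v = [exists n in [set u in J :\ v | e v u], connect (er e (J :\ v)) x n].
Proof.
move=> sym vJ xK; apply/idP/existsP => [h|[n /andP[]]].
  case: (connJ_split sym xK h) => [h'|[n nN hn]]; last by exists n; rewrite nN.
  by case: (conn_in h') => [xv|]; [move: xK; rewrite xv !inE eqxx | rewrite !inE eqxx].
rewrite !inE => /andP[/andP[nv nJ] evn] hn.
apply: (connect_trans (y := n)).
  exact: conn_mono (subD1 _ _) hn.
by apply: connect1; rewrite /er nJ vJ sym.
Qed.

Lemma comp_rec (V : finType) (e : rel V) (v : V) (J : {set V}) :
  chordal e -> symmetric e -> irreflexive e -> v \in J ->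
  (#|cls e J @: J| + #|cls e [set u in J :\ v | e v u] @: [set u in J :\ v | e v u]|
   = #|cls e (J :\ v) @: (J :\ v)| + 1)%N.
Proof.
move=> ch sym irr vJ.
set K := J :\ v; set N := [set u in K | e v u].
have NK : N \subset K by apply/subsetP=> u; rewrite inE => /andP[].
have e1 : #|cls e N @: N| = #|cls e K @: N|.
  apply: card_kernel => a b aN bN; rewrite !cls_eq //.
  apply/idP/idP; first exact: conn_mono.
  exact: chord_conn.
have e2 : #|cls e K @: K| = (#|cls e K @: N| + #|cls e K @: K :\: cls e K @: N|)%N.
  rewrite -(cardsID (cls e K @: N) (cls e K @: K)).
  congr (_ + _)%N; apply: eq_card => S; rewrite inE.
  apply/andP/idP => [[] //|h]; split => //.
  by move: h; apply/subsetP; apply: imsetS.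
have e3 : #|cls e J @: J| = (1 + #|cls e J @: J :\ cls e J v|)%N.
  by rewrite (cardsD1 (cls e J v)) imset_f.
have e4 : cls e J @: J :\ cls e J v = cls e K @: K :\: cls e K @: N.
  apply/setP=> S; rewrite !inE; apply/andP/andP.
    case=> [Sv /imsetP[x xJ SE]].
    have nc : ~~ connect (er e J) x v by rewrite -cls_eq // -SE.
    have xK : x \in K.
      rewrite !inE xJ andbT; apply/negP=> /eqP xv; move: nc; rewrite xv connect0.
      done.
    have SE' : S = cls e K x.
      by rewrite SE; apply/setP=> y; rewrite !inE (connJ_K y sym vJ xK nc).
    split; last by rewrite SE' imset_f.
    apply/imsetP=> [[n nN]]; rewrite SE' => /eqP; rewrite cls_eq // => xn.
    move/negP: nc; apply; rewrite connJv //; apply/existsP; exists n; by rewrite nN.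
  case=> [SN /imsetP[x xK SE]].
  have xJ : x \in J by move: xK; rewrite !inE => /andP[].
  have nc : ~~ connect (er e J) x v.
    rewrite connJv //; apply/existsP=> [[n /andP[nN xn]]].
    move/negP: SN; apply; apply/imsetP; exists n => //; apply/eqP; rewrite SE cls_eq //.
  have SE' : S = cls e J x.
    by rewrite SE; apply/setP=> y; rewrite !inE (connJ_K y sym vJ xK nc).
  split; last by rewrite SE' imset_f.
  by rewrite SE' cls_eq.
rewrite e1 e2 e3 e4; nlia.
Qed.

Local Open Scope ring_scope.

Lemma clique_U1 (V : finType) (e : rel V) v (L : {set V}) :
  symmetric e -> v \notin L ->
  clique e (v |: L) = ((L == set0) || clique e L) && [forall u in L, e v u].
Proof.
move=> sym vL; rewrite /clique.
apply/andP/andP => [[_ /forallP H]|[h1 /forall_inP h2]].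
  split.
    case: (L =P set0) => //= _.
    apply/forall_inP=> x xL; apply/forall_inP=> y yL; apply/implyP=> xy.
    have := H x; rewrite setU1r // => /forall_inP /(_ y); rewrite setU1r //.
    by move=> /(_ isT) /implyP; apply.
  apply/forall_inP=> u uL.
  have := H v; rewrite setU11 => /forall_inP /(_ u); rewrite setU1r //.
  move=> /(_ isT) /implyP; apply; apply/eqP=> uv; move: vL; by rewrite uv uL.
split; first by apply/set0Pn; exists v; exact: setU11.
apply/forall_inP=> x /setU1P xv; apply/forall_inP=> y /setU1P yv; apply/implyP.
case: xv => [->|xL]; case: yv => [->|yL].
- by rewrite eqxx.
- by move=> _; exact: h2.
- by move=> _; rewrite sym; apply: h2.
- move=> xy; move: h1; case: (L =P set0) => [L0|_] /=; first by move: xL; rewrite L0 inE.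
  move=> /forall_inP /(_ x xL) /forall_inP /(_ y yL) /implyP; exact.
Qed.

Definition F (R : numDomainType) (V : finType) (e : rel V) (m : nat) (J : {set V}) : R :=
  \sum_(I : {set V} | clique e I && (I \subset J) && (#|I| <= m)%N) (-1) ^+ (#|I| - 1).

Lemma clique_card (V : finType) (e : rel V) I : clique e I -> (0 < #|I|)%N.
Proof. by rewrite card_gt0 => /andP[]. Qed.

Lemma F0 (R : numDomainType) (V : finType) (e : rel V) J : F R e 0 J = 0.
Proof.
rewrite /F big_pred0 // => I; apply/negbTE; apply/negP => /andP[/andP[cI _]].
by move: (clique_card cI); case: #|I|.
Qed.

Lemma Fset0 (R : numDomainType) (V : finType) (e : rel V) m : F R e m set0 = 0.
Proof.
rewrite /F big_pred0 // => I; apply/negbTE; apply/negP => /andP[/andP[/andP[]]].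
by move=> I0 _; rewrite subset0 (negbTE I0).
Qed.

Lemma F_rec (R : numDomainType) (V : finType) (e : rel V) v (J : {set V}) m :
  symmetric e -> v \in J ->
  F R e m.+1 J = F R e m.+1 (J :\ v) + 1 - F R e m [set u in J :\ v | e v u].
Proof.
move=> sym vJ.
set N := [set u in J :\ v | e v u].
rewrite /F (bigID [pred I : {set V} | v \in I]) /= addrC -addrA; congr (_ + _).
  apply: eq_bigl => I; rewrite subsetD1.
  by case: (clique e I); case: (I \subset J); case: (v \in I); case: (#|I| <= m.+1)%N.
rewrite (reindex_onto (fun L => v |: L) (fun I => I :\ v)) /=; last first.
  by move=> I /andP[_ vI]; rewrite setD1K.
rewrite (eq_bigl (fun L => ((L == set0) || clique e L) && (L \subset N) && (#|L| <= m)%N)); last first.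
  move=> L; case vL: (v \in L).
    have -> : (L \subset N) = false.
      apply/negbTE/negP=> /subsetP /(_ v vL); by rewrite !inE eqxx.
    rewrite andbF andFb.
    have -> : ((v |: L) :\ v == L) = false.
      by apply/negbTE/eqP => h; move: vL; rewrite -h !inE eqxx.
    by rewrite andbF.
  rewrite setU1K ?vL // eqxx andbT setU11 andbT clique_U1 ?vL //.
  rewrite cardsU1 vL add1n ltnS subUset sub1set vJ /=.
  have -> : (L \subset N) = (L \subset J) && [forall u in L, e v u].
    apply/subsetP/andP => [H|[/subsetP H1 /forall_inP H2] u uL].
      split; first by apply/subsetP=> u /H; rewrite !inE => /andP[/andP[]].
      by apply/forall_inP=> u /H; rewrite !inE => /andP[].
    by rewrite !inE H1 // H2 // !andbT; apply/eqP=> uv; move: vL; rewrite -uv uL.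
  by case: (L == set0); case: (clique e L); case: (L \subset J); case: [forall u in L, e v u]; case: (#|L| <= m)%N.
rewrite (bigD1 set0) /=; last by rewrite eqxx sub0set cards0.
rewrite setU0 cards1 subnn expr0; congr (_ + _).
rewrite -sumrN; apply: eq_big => L.
  case: (L =P set0) => [->|_] /=.
    by rewrite /clique eqxx /= !andbF.
  by rewrite !andbT.
move=> /andP[/andP[/andP[_ LN] _] L0].
have vL : v \notin L.
  by apply/negP=> /(subsetP LN); rewrite !inE eqxx.
rewrite cardsU1 vL add1n subSS subn0.
rewrite -card_gt0 in L0.
case: #|L| L0 => [//|n] _.
by rewrite subSS subn0 exprS mulN1r.
Qed.

Local Open Scope ring_scope.

Definition cc (V : finType) (e : rel V) (J : {set V}) : nat := #|cls e J @: J|.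

Lemma F_bound (R : numDomainType) (V : finType) (e : rel V) :
  chordal e -> symmetric e -> irreflexive e ->
  forall m J, (~~ odd m -> F R e m J <= (cc e J)%:R) /\ (odd m -> (cc e J)%:R <= F R e m J).
Proof.
move=> ch sym irr; elim=> [|m IHm] J.
  by rewrite F0; split => // _; rewrite ler0n.
have base : forall J : {set V}, J = set0 ->
   (~~ odd m.+1 -> F R e m.+1 J <= (cc e J)%:R) /\ (odd m.+1 -> (cc e J)%:R <= F R e m.+1 J).
  by move=> J' ->; rewrite Fset0 /cc imset0 cards0.
move: {2}#|J| (leqnn #|J|) => k; elim: k J => [|k IHk] J Jk.
  by apply: base; apply: cards0_eq; move: Jk; rewrite leqn0 => /eqP.
have [J0|/set0Pn [v vJ]] := eqVneq J set0; first by apply: base.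
have hK : (#|J :\ v| <= k)%N.
  by move: Jk; rewrite (cardsD1 v J) vJ add1n ltnS.
have [IK1 IK2] := IHk _ hK.
have [IN1 IN2] := IHm [set u in J :\ v | e v u].
have hc := comp_rec ch sym irr vJ.
have hcR : (cc e J)%:R = (cc e (J :\ v))%:R + 1 - (cc e [set u in J :\ v | e v u])%:R :> R.
  have : ((cc e J + cc e [set u in J :\ v | e v u])%N%:R = (cc e (J :\ v) + 1)%N%:R :> R).
    by rewrite /cc hc.
  by rewrite !natrD mulr1n => <-; rewrite addrK.
rewrite (F_rec R m sym vJ) hcR /=; split => hm.
  by apply: lerB; [apply: lerD => //; apply: IK1 | apply: IN2; move: hm; case: (odd m)].
by apply: lerB; [apply: lerD => //; apply: IK2 | apply: IN1; move: hm; case: (odd m)].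
Qed.

Local Open Scope ring_scope.

Lemma meas_ext (R : realFieldType) (Omega : Type) (PS : probSpace R Omega) (X Y : Omega -> Prop) :
  (forall w, X w <-> Y w) -> meas PS X -> meas PS Y.
Proof.
move=> h; have -> // : X = Y.
by apply: functional_extensionality => w; apply: propositional_extensionality.
Qed.

Lemma meas_empty (R : realFieldType) (Omega : Type) (PS : probSpace R Omega) :
  meas PS (fun _ => False).
Proof.
apply: (meas_ext (X := fun w => ~ True)); first by move=> w; split.
exact: meas_compl (meas_full PS).
Qed.

Lemma Pr_empty (R : realFieldType) (Omega : Type) (PS : probSpace R Omega) :
  Pr PS (fun _ => False) = 0.
Proof.
have h := Pr_add (meas_empty PS) (meas_empty PS) (fun w (a : False) _ => a).
have e : Pr PS (fun w => False \/ False) = Pr PS (fun _ => False).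
  by apply: Pr_ext => w; split => [[]|].
rewrite e in h.
by apply: (@addrI _ (Pr PS (fun _ => False))); rewrite addr0 -h.
Qed.

Lemma meas_or (R : realFieldType) (Omega : Type) (PS : probSpace R Omega) (X Y : Omega -> Prop) :
  meas PS X -> meas PS Y -> meas PS (fun w => X w \/ Y w).
Proof.
move=> mX mY.
apply: (meas_ext (X := fun w => ~ (~ X w /\ ~ Y w))).
  by move=> w; split => [h|[h|h] [h1 h2]]; [apply: NNPP => h'; apply: h; split => ? ; apply: h'; [left|right] | exact: h1 | exact: h2].
by apply: meas_compl; apply: meas_inter; apply: meas_compl.
Qed.

Lemma meas_all (R : realFieldType) (Omega : Type) (PS : probSpace R Omega) (T : eqType)
  (P : T -> Omega -> Prop) (s : seq T) :
  (forall j, meas PS (P j)) -> meas PS (fun w => forall j, j \in s -> P j w).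
Proof.
move=> mP; elim: s => [|x s IH].
  by apply: (meas_ext (X := fun _ => True)) (meas_full PS) => w; split.
apply: (meas_ext (X := fun w => P x w /\ (forall j, j \in s -> P j w))); last first.
  exact: meas_inter.
move=> w; split => [[h1 h2] j|h]; first by rewrite inE => /orP[/eqP ->|/h2].
by split => [|j js]; apply: h; rewrite inE ?eqxx ?js ?orbT.
Qed.

Lemma Pr_sum (R : realFieldType) (Omega : Type) (PS : probSpace R Omega) (T : eqType)
  (P : T -> Omega -> Prop) (s : seq T) :
  uniq s -> (forall j, meas PS (P j)) ->
  (forall j k w, j != k -> P j w -> P k w -> False) ->
  meas PS (fun w => exists j, j \in s /\ P j w) /\
  Pr PS (fun w => exists j, j \in s /\ P j w) = \sum_(j <- s) Pr PS (P j).
Proof.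
move=> us mP dP; elim: s us => [|x s IH] /=.
  move=> _; rewrite big_nil; split.
    by apply: (meas_ext (X := fun _ => False)) (meas_empty PS) => w; split => // [[j [jn _]]]; rewrite in_nil in jn.
  rewrite -(Pr_empty PS); apply: Pr_ext => w; split => // [[j [jn _]]]; by rewrite in_nil in jn.
move=> /andP[xs us]; have [m1 p1] := IH us.
have e : forall w, (exists j, j \in x :: s /\ P j w) <-> (P x w \/ exists j, j \in s /\ P j w).
  move=> w; split => [[j [+ h]]|[h|[j [js h]]]].
    by rewrite inE => /orP[/eqP <-|js]; [left|right; exists j].
    by exists x; rewrite inE eqxx.
  by exists j; rewrite inE js orbT.
split; first exact: meas_ext (fun w => iff_sym (e w)) (meas_or (mP x) m1).
rewrite big_cons -p1 -(Pr_add (mP x) m1); last first.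
  move=> w hx [j [js hj]]; apply: (dP x j w) => //.
  by apply/eqP=> xj; move: xs; rewrite xj js.
by apply: Pr_ext => w; apply: e.
Qed.

Local Open Scope ring_scope.

Lemma pdecP (P : Prop) : pdec P = true <-> P.
Proof. by rewrite /pdec; case: excluded_middle_informative. Qed.

Lemma meas_atom (R : realFieldType) (V : finType) (Omega : Type) (PS : probSpace R Omega)
  (A : V -> Omega -> Prop) (J : {set V}) :
  (forall v, meas PS (A v)) -> meas PS (atomB A J).
Proof.
move=> mA.
apply: (meas_ext (X := fun w => (forall i, i \in enum J -> A i w) /\
                               (forall i, i \in enum (~: J) -> ~ A i w))).
  move=> w; split => -[h1 h2]; split.
  - by move=> i iJ; apply: h1; rewrite mem_enum.
  - by move=> i iJ; apply: h2; rewrite mem_enum inE.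
  - by move=> i; rewrite mem_enum; exact: h1.
  - by move=> i; rewrite mem_enum inE; exact: h2.
apply: meas_inter; first exact: meas_all.
by apply: meas_all => j; apply: meas_compl.
Qed.

Lemma atom_uniq (V : finType) (Omega : Type) (A : V -> Omega -> Prop) (J J' : {set V}) w :
  atomB A J w -> atomB A J' w -> J = J'.
Proof.
move=> [h1 h2] [h1' h2']; apply/setP=> i; apply/idP/idP => h.
  by apply: contraT => /h2'; move/(_ (h1 _ h)).
by apply: contraT => /h2; move/(_ (h1' _ h)).
Qed.

Lemma atom_wit (V : finType) (Omega : Type) (A : V -> Omega -> Prop) w :
  atomB A [set i | pdec (A i w)] w.
Proof.
split => i; rewrite inE; first by move/pdecP.
by move=> h hA; move: h; rewrite (proj2 (pdecP _) hA).
Qed.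

Lemma Pr_atoms (R : realFieldType) (V : finType) (Omega : Type) (PS : probSpace R Omega)
  (A : V -> Omega -> Prop) (Q : pred {set V}) :
  (forall v, meas PS (A v)) ->
  Pr PS (fun w => exists J, Q J /\ atomB A J w) = \sum_(J | Q J) Pr PS (atomB A J).
Proof.
move=> mA.
have [_ h] := Pr_sum (PS := PS) (P := atomB A) (enum_uniq Q) (fun J => meas_atom (PS := PS) J mA)
  (fun j k w jk hj hk => (negP jk) (introT eqP (atom_uniq hj hk))).
rewrite big_enum in h; rewrite -h; apply: Pr_ext => w.
by split => -[J [h1 h2]]; exists J; rewrite ?mem_enum in h1 *.
Qed.

Local Open Scope ring_scope.

Lemma F_full (R : numDomainType) (V : finType) (e : rel V) J :
  chordal e -> symmetric e -> irreflexive e -> F R e #|V| J = (cc e J)%:R.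
Proof.
move=> ch sym irr.
have eqF : F R e #|V|.+1 J = F R e #|V| J.
  by apply: eq_bigl => I; rewrite (leq_trans (max_card _)) // (max_card (mem I)) !andbT.
have [h1 h2] := F_bound R ch sym irr #|V| J.
have [h3 h4] := F_bound R ch sym irr #|V|.+1 J.
rewrite eqF /= in h3 h4.
apply/eqP; rewrite eq_le; case: (odd #|V|) h1 h2 h3 h4 => h1 h2 h3 h4.
  by rewrite h2 // h3.
by rewrite h1 // h4.
Qed.

Lemma interA_dec (R : realFieldType) (V : finType) (Omega : Type) (PS : probSpace R Omega)
  (A : V -> Omega -> Prop) (I : {set V}) :
  (forall v, meas PS (A v)) ->
  Pr PS (interA A I) = \sum_(J : {set V} | I \subset J) Pr PS (atomB A J).
Proof.
move=> mA; rewrite -(Pr_atoms (PS := PS) (A := A) (fun J : {set V} => I \subset J) mA); apply: Pr_ext => w; split.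
  move=> h; exists [set i | pdec (A i w)]; split; last exact: atom_wit.
  by apply/subsetP=> i iI; rewrite inE; apply/pdecP; apply: h.
by move=> [J [/subsetP IJ [h1 _]]] i iI; apply: h1; apply: IJ.
Qed.

Lemma unionA_dec (R : realFieldType) (V : finType) (Omega : Type) (PS : probSpace R Omega)
  (A : V -> Omega -> Prop) :
  (forall v, meas PS (A v)) ->
  Pr PS (unionA A) = \sum_(J : {set V} | J != set0) Pr PS (atomB A J).
Proof.
move=> mA; rewrite -(Pr_atoms (PS := PS) (A := A) (fun J : {set V} => J != set0) mA); apply: Pr_ext => w; split.
  move=> [v h]; exists [set i | pdec (A i w)]; split; last exact: atom_wit.
  by apply/set0Pn; exists v; rewrite inE; apply/pdecP.
by move=> [J [/set0Pn [v vJ] [h1 _]]]; exists v; apply: h1.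
Qed.

Lemma S_eq (R : realFieldType) (V : finType) (e : rel V) (Omega : Type) (PS : probSpace R Omega)
  (A : V -> Omega -> Prop) m :
  (forall v, meas PS (A v)) ->
  \sum_(I : {set V} | clique e I && (#|I| <= m)%N) (-1) ^+ (#|I| - 1) * Pr PS (interA A I)
  = \sum_(J : {set V}) Pr PS (atomB A J) * F R e m J.
Proof.
move=> mA.
under eq_bigr => I _ do rewrite (interA_dec (PS := PS) (A := A) I mA) big_distrr.
rewrite (exchange_big_dep xpredT) //=.
apply: eq_bigr => J _; rewrite /F big_distrr /=.
apply: eq_big => [I|I _]; last by rewrite mulrC.
by case: (clique e I); case: (I \subset J); case: (#|I| <= m)%N.
Qed.

Local Open Scope ring_scope.

Theorem mainTheorem4 (R : realFieldType) (V : finType) (e : rel V)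
  (Omega : Type) (PS : probSpace R Omega) (A : V -> Omega -> Prop) :
  symmetric e -> irreflexive e -> chordal e -> (0 < #|V|)%N ->
  (forall v, meas PS (A v)) ->
  (exists w, exists v, A v w) ->
  (forall r : nat, (1 <= r)%N ->
     Pr PS (unionA A) >=
     (alpha' e A)%:R^-1 *
       \sum_(I : {set V} | clique e I && (#|I| <= 2 * r)%N)
          (-1) ^+ (#|I| - 1)%N * Pr PS (interA A I))
  /\
  Pr PS (unionA A) >=
     (alpha' e A)%:R^-1 *
       \sum_(I : {set V} | clique e I)
          (-1) ^+ (#|I| - 1)%N * Pr PS (interA A I)
  /\
  ((forall J : {set V}, J != set0 -> (exists w, atomB A J w) ->
       ncomp_induced e J = 1%N) ->
   Pr PS (unionA A) =
     \sum_(I : {set V} | clique e I)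
        (-1) ^+ (#|I| - 1)%N * Pr PS (interA A I)).
Proof.
move=> sym irr ch _ mA [w0 [v0 Av0]].
pose p := fun J => Pr PS (atomB A J).
have p0 : forall J, 0 <= p J by move=> J; apply: Pr_ge0; exact: meas_atom.
have pE : forall J, ~ (exists w, atomB A J w) -> p J = 0.
  move=> J nJ; rewrite /p -(Pr_empty PS); apply: Pr_ext => w; split => // h.
  by apply: nJ; exists w.
have cc0 : cc e set0 = 0%N by rewrite /cc imset0 cards0.
have ccn : forall J, ncomp_induced e J = cc e J by move=> J; rewrite ncompE.
have apos : (0 < alpha' e A)%N.
  pose J0 := [set i | pdec (A i w0)].
  have vJ0 : v0 \in J0 by rewrite inE; apply/pdecP.
  apply: (@leq_trans (ncomp_induced e J0)).
    by rewrite ccn /cc card_gt0; apply/set0Pn; exists (cls e J0 v0); apply: imset_f.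
  apply: leq_bigmax_cond; rewrite (_ : J0 != set0); last by apply/set0Pn; exists v0.
  by apply/pdecP; exists w0; apply: atom_wit.
have key : \sum_J p J * (cc e J)%:R <= (alpha' e A)%:R * Pr PS (unionA A).
  rewrite (unionA_dec (PS := PS) (A := A) mA) big_distrr /=.
  rewrite [X in X <= _](bigID (fun J : {set V} => J != set0)) /=.
  rewrite [X in _ + X]big1 ?addr0; last first.
    by move=> J /negPn /eqP ->; rewrite cc0 mulr0.
  apply: ler_sum => J J0; case: (classic (exists w, atomB A J w)) => hJ.
    rewrite mulrC; apply: ler_wpM2r; first exact: p0.
    rewrite ler_nat -ccn; apply: leq_bigmax_cond; rewrite J0 /=; exact/pdecP.
  by have := pE J hJ; rewrite /p => ->; rewrite mul0r mulr0.
have Sfull : \sum_(I : {set V} | clique e I) (-1) ^+ (#|I| - 1)%N * Pr PS (interA A I)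
   = \sum_J p J * (cc e J)%:R.
  rewrite (eq_bigl (fun I : {set V} => clique e I && (#|I| <= #|V|)%N)); last first.
    by move=> I; rewrite max_card andbT.
  rewrite (@S_eq R V e Omega PS A #|V| mA); apply: eq_bigr => J _; by rewrite F_full.
have ap : (0 : R) < (alpha' e A)%:R by rewrite ltr0n.
split; [|split].
- move=> r _; rewrite ler_pdivrMl // (@S_eq R V e Omega PS A _ mA); apply: le_trans key.
  apply: ler_sum => J _; apply: ler_wpM2l; first exact: p0.
  by apply: (proj1 (F_bound R ch sym irr _ J)); rewrite mul2n odd_double.
- by rewrite ler_pdivrMl // Sfull.
- move=> H; rewrite Sfull (unionA_dec (PS := PS) (A := A) mA).
  rewrite [RHS](bigID (fun J : {set V} => J != set0)) /=.
  rewrite [X in _ = _ + X]big1 ?addr0; last first.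
    by move=> J /negPn /eqP ->; rewrite cc0 mulr0.
  apply: eq_bigr => J J0.
  case: (classic (exists w, atomB A J w)) => hJ.
    by rewrite -ccn H // mulr1.
  by have := pE J hJ; rewrite /p => ->; rewrite mul0r.
Qed.
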